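(* Let $A=\omega_1^*+\omega_1$. There exist linear orders $X$ and $Y$ with $X\not\cong Y$ such that \[ X\cong A\times Y,\qquad X\cong Y\times\omega,\qquad Y\cong A\times X,\qquad Y\cong X\times\omega . \] In particular, there exist two non-isomorphic linear orders each of which is both a left-hand divisor and a right-hand divisor of the other.
   Context: For linear orders $X,Y$, the lexicographical product $X\times Y$ is the set $\{(x,y):x\in X,\ y\in Y\}$ ordered lexicographically (first by $x$, then by $y$); equivalently, it is the order obtained from $X$ by replacing each point of $X$ with a copy of $Y$. For linear orders $X$ and $Y$, $X+Y$ denotes a copy of $X$ followed by a copy of $Y$, and $X^*$ denotes the reverse of $X$. $\omega$ is the order type of the natural numbers and $\omega_1$ is the first uncountable ordinal, so $A=\omega_1^*+\omega_1$ is the reverse of $\omega_1$ followed by $\omega_1$. An order $Z$ is a left-hand divisor of $W$ if $W\cong Z\times B$ for some order $B$, and a right-hand divisor of $W$ if $W\cong B\times Z$ for some order $B$. *)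

(* Defs.v *)
From Stdlib Require Import Arith.

Record LinOrd : Type := {
  carrier :> Type;
  lt : carrier -> carrier -> Prop;
  lt_irrefl : forall x, ~ lt x x;
  lt_trans : forall x y z, lt x y -> lt y z -> lt x z;
  lt_total : forall x y, lt x y \/ x = y \/ lt y x
}.
Arguments lt {l} _ _.

Definition iso (X Y : LinOrd) : Prop :=
  exists f : X -> Y,
    (forall y : Y, exists x : X, f x = y) /\
    (forall x1 x2 : X, f x1 = f x2 -> x1 = x2) /\
    (forall x1 x2 : X, lt x1 x2 <-> lt (f x1) (f x2)).

Definition countable (T : Type) : Prop :=
  exists f : T -> nat, forall a b, f a = f b -> a = b.

Definition is_omega1 (W : LinOrd) : Prop :=
  well_founded (@lt W) /\
  ~ countable W /\
  forall w : W, countable {v : W | lt v w}.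

Program Definition omega : LinOrd := {| carrier := nat; lt := Peano.lt |}.
Next Obligation. apply Nat.lt_irrefl. Qed.
Next Obligation. eapply Nat.lt_trans; eauto. Qed.
Next Obligation. destruct (Nat.lt_trichotomy x y) as [H|[H|H]]; auto. Qed.

Program Definition rev (X : LinOrd) : LinOrd :=
  {| carrier := carrier X; lt := fun a b => lt b a |}.
Next Obligation. apply lt_irrefl. Qed.
Next Obligation. eapply lt_trans; eauto. Qed.
Next Obligation. destruct (lt_total X x y) as [H|[H|H]]; auto. Qed.

Definition sum_lt (X Y : LinOrd) (a b : X + Y) : Prop :=
  match a, b with
  | inl x1, inl x2 => lt x1 x2
  | inr y1, inr y2 => lt y1 y2
  | inl _, inr _ => True
  | inr _, inl _ => False
  end.

Program Definition osum (X Y : LinOrd) : LinOrd :=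
  {| carrier := (carrier X + carrier Y)%type; lt := sum_lt X Y |}.
Next Obligation. destruct x; simpl; apply lt_irrefl. Qed.
Next Obligation.
  destruct x, y, z; simpl in *; try contradiction; auto; eapply lt_trans; eauto.
Qed.
Next Obligation.
  destruct x as [a|a], y as [b|b]; simpl; auto.
  - destruct (lt_total X a b) as [H|[H|H]]; subst; auto.
  - destruct (lt_total Y a b) as [H|[H|H]]; subst; auto.
Qed.

(** Lexicographic product X x Y: ordered first by x, then by y
    (each point of X replaced by a copy of Y). *)
Definition lex_lt (X Y : LinOrd) (a b : X * Y) : Prop :=
  lt (fst a) (fst b) \/ (fst a = fst b /\ lt (snd a) (snd b)).

Program Definition lexprod (X Y : LinOrd) : LinOrd :=
  {| carrier := (carrier X * carrier Y)%type; lt := lex_lt X Y |}.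
Next Obligation.
  unfold lex_lt; intros [H|[_ H]]; eapply lt_irrefl; eauto.
Qed.
Next Obligation.
  unfold lex_lt in *; destruct H as [H|[E H]], H0 as [H0|[E0 H0]].
  - left; eapply lt_trans; eauto.
  - left; rewrite <- E0; auto.
  - left; rewrite E; auto.
  - right; split; [congruence | eapply lt_trans; eauto].
Qed.
Next Obligation.
  match goal with |- lex_lt _ _ ?p ?q \/ _ => destruct p as [a1 b1], q as [a2 b2] end; unfold lex_lt; simpl.
  destruct (lt_total X a1 a2) as [H|[H|H]]; auto; subst.
  destruct (lt_total Y b1 b2) as [H|[H|H]]; subst; auto.
Qed.

(* Main.v *)
From Stdlib Require Import Arith Lia Classical ClassicalEpsilon FunctionalExtensionality ProofIrrelevance Cantor Bool.
Require Import Defs.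

Section Omega1.
Variable W : LinOrd.
Hypothesis HW : is_omega1 W.

Lemma W_inh : inhabited W.
Proof.
  destruct HW as [_ [Hnc _]].
  destruct (classic (inhabited W)) as [h|h]; auto.
  exfalso; apply Hnc. exists (fun w => False_rect nat (h (inhabits w))).
  intros a; exfalso; exact (h (inhabits a)).
Qed.

Lemma W_nomax : forall w : W, exists v, lt w v.
Proof.
  intros w. destruct HW as [_ [Hnc Hcs]].
  apply NNPP; intro H. apply Hnc.
  destruct (Hcs w) as [g Hg].
  assert (Hle: forall v, lt v w \/ v = w).
  { intro v. destruct (lt_total W v w) as [h|[h|h]]; auto. exfalso; apply H; eauto. }
  exists (fun v => match excluded_middle_informative (lt v w) with
     | left h => S (g (exist _ v h)) | right _ => 0 end).
  intros a b. destruct (excluded_middle_informative (lt a w)) as [ha|ha];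
  destruct (excluded_middle_informative (lt b w)) as [hb|hb]; intro E.
  - injection E as E. apply Hg in E. injection E. auto.
  - discriminate.
  - discriminate.
  - destruct (Hle a); [contradiction|]. destruct (Hle b); [contradiction|]. congruence.
Qed.

Lemma W_bounded : forall s : nat -> W, exists v, forall n, lt (s n) v.
Proof.
  intros s. destruct HW as [_ [Hnc Hcs]]. apply NNPP; intro H. apply Hnc.
  assert (Hc: forall v, exists n, lt v (s n) \/ v = s n).
  { intro v. apply NNPP; intro H2. apply H. exists v. intro n.
    destruct (lt_total W (s n) v) as [h|[h|h]]; auto; exfalso; apply H2; exists n; auto. }
  assert (G: forall n, {g : {v | lt v (s n)} -> nat | forall a b, g a = g b -> a = b}).
  { intro n. apply constructive_indefinite_description. apply Hcs. }
  set (code := fun n v => match excluded_middle_informative (lt v (s n)) with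
                        | left h => S (proj1_sig (G n) (exist _ v h)) | right _ => 0 end).
  assert (Hcode: forall n a b, code n a = code n b -> (lt a (s n) \/ a = s n) ->
                 (lt b (s n) \/ b = s n) -> a = b).
  { intros n a b. unfold code.
    destruct (excluded_middle_informative (lt a (s n))) as [ha|ha];
    destruct (excluded_middle_informative (lt b (s n))) as [hb|hb]; intros E Ha Hb.
    - injection E as E. apply (proj2_sig (G n)) in E. injection E. auto.
    - discriminate.
    - discriminate.
    - destruct Ha; [contradiction|]. destruct Hb; [contradiction|]. congruence. }
  set (N := fun v => proj1_sig (constructive_indefinite_description _ (Hc v))).
  assert (HN: forall v, lt v (s (N v)) \/ v = s (N v)).
  { intro v. exact (proj2_sig (constructive_indefinite_description _ (Hc v))). }
  exists (fun v => to_nat (N v, code (N v) v)).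
  intros a b E. apply to_nat_inj in E. injection E as E1 E2.
  rewrite E1 in E2. apply (Hcode (N b)); auto. rewrite <- E1; auto.
Qed.

Lemma W_min (P : W -> Prop) : (exists u, P u) -> exists m, P m /\ forall x, P x -> ~ lt x m.
Proof.
  destruct HW as [Hwf _]. intros [u Hu]. revert Hu. pattern u. apply (well_founded_ind Hwf).
  intros x IH Hx. destruct (classic (exists y, P y /\ lt y x)) as [[y [Hy Hyx]]|N].
  - exact (IH y Hyx Hy).
  - exists x; split; auto. intros y Hy Hyx; apply N; eauto.
Qed.

Lemma W_lub (s : nat -> W) : (forall n, lt (s n) (s (S n))) ->
  exists l, (forall n, lt (s n) l) /\ forall v, lt v l -> exists n, lt v (s n).
Proof.
  intro Hinc.
  destruct (W_bounded s) as [b Hb].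
  destruct (W_min (fun u => forall n, lt (s n) u)) as [l [Hl Hmin]]; eauto.
  exists l; split; auto. intros v Hv. apply NNPP; intro N. apply (Hmin v); auto.
  intro n. destruct (lt_total W (s (S n)) v) as [h|[h|h]].
  - eapply lt_trans; eauto.
  - subst; auto.
  - exfalso; apply N; exists (S n); auto.
Qed.
End Omega1.

Lemma least_nat (P : nat -> Prop) : (exists i, P i) -> exists i, P i /\ forall j, j < i -> ~ P j.
Proof.
  intros [i Hi]. induction i as [i IH] using (well_founded_induction lt_wf).
  destruct (classic (exists j, j < i /\ P j)) as [[j [Hj Pj]]|N].
  - exact (IH j Hj Pj).
  - exists i; split; auto. intros j Hj Pj; apply N; eauto.
Qed.

Section Seq.
Variable W : LinOrd.

Definition A := osum (rev W) W.
Definition ltA (x y : A) : Prop := @lt A x y.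

Lemma ltA_irrefl x : ~ ltA x x.  Proof. apply lt_irrefl. Qed.
Lemma ltA_trans x y z : ltA x y -> ltA y z -> ltA x z.  Proof. apply lt_trans. Qed.
Lemma ltA_total x y : ltA x y \/ x = y \/ ltA y x.  Proof. apply lt_total. Qed.
Lemma ltA_asym x y : ltA x y -> ltA y x -> False.
Proof. intros h1 h2. apply (ltA_irrefl x). eapply ltA_trans; eauto. Qed.

Definition side (x : A) : bool := match x with inl _ => false | inr _ => true end.

Definition eqP (k : nat) (a b : nat -> A) := forall i, i < k -> a i = b i.
Definition ltP (k : nat) (a b : nat -> A) :=
  exists j, j < k /\ (forall i, i < j -> a i = b i) /\ ltA (a j) (b j).
Definition leP k a b := ltP k a b \/ eqP k a b.

Lemma ltP_irrefl k a : ~ ltP k a a.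
Proof. intros [j [_ [_ h]]]. eapply ltA_irrefl; eauto. Qed.

Lemma ltP_eqP k a b : ltP k a b -> eqP k a b -> False.
Proof. intros [j [hj [_ h]]] E. rewrite (E j hj) in h. eapply ltA_irrefl; eauto. Qed.

Lemma ltP_trans k a b c : ltP k a b -> ltP k b c -> ltP k a c.
Proof.
  intros [j1 [h1 [e1 l1]]] [j2 [h2 [e2 l2]]].
  destruct (lt_eq_lt_dec j1 j2) as [[H|H]|H].
  - exists j1; repeat split; auto.
    + intros i hi. rewrite e1 by lia. apply e2; lia.
    + rewrite <- (e2 j1 H). auto.
  - subst. exists j2; repeat split; auto.
    + intros i hi. rewrite e1 by lia. apply e2; lia.
    + eapply ltA_trans; eauto.
  - exists j2; repeat split; auto.
    + intros i hi. rewrite e1 by lia. apply e2; lia.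
    + rewrite (e1 j2 H). auto.
Qed.

Lemma ltP_eqP_r k a b c : ltP k a b -> eqP k b c -> ltP k a c.
Proof.
  intros [j [hj [e l]]] E. exists j; repeat split; auto.
  - intros i hi. rewrite e by auto. apply E; lia.
  - rewrite <- (E j hj); auto.
Qed.
Lemma ltP_eqP_l k a b c : eqP k a b -> ltP k b c -> ltP k a c.
Proof.
  intros E [j [hj [e l]]]. exists j; repeat split; auto.
  - intros i hi. rewrite E by lia. auto.
  - rewrite (E j hj); auto.
Qed.

Lemma leP_ltP_trans k a b c : leP k a b -> ltP k b c -> ltP k a c.
Proof. intros [h|h] h2. eapply ltP_trans; eauto. eapply ltP_eqP_l; eauto. Qed.
Lemma ltP_leP_trans k a b c : ltP k a b -> leP k b c -> ltP k a c.
Proof. intros h [h2|h2]. eapply ltP_trans; eauto. eapply ltP_eqP_r; eauto. Qed.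

Lemma ltP_asym k a b : ltP k a b -> ltP k b a -> False.
Proof. intros h1 h2. eapply ltP_irrefl, ltP_trans; eauto. Qed.

Lemma ltP_total k a b : ltP k a b \/ eqP k a b \/ ltP k b a.
Proof.
  destruct (classic (exists i, i < k /\ a i <> b i)) as [H|H].
  - destruct (least_nat _ H) as [j [[hj hne] hmin]].
    assert (He: forall i, i < j -> a i = b i).
    { intros i hi. apply NNPP; intro N. apply (hmin i hi). split; auto; lia. }
    destruct (ltA_total (a j) (b j)) as [l|[l|l]].
    + left; exists j; auto.
    + contradiction.
    + right; right; exists j; repeat split; auto. intros; symmetry; auto.
  - right; left. intros i hi. apply NNPP; intro N; apply H; eauto.
Qed.

Lemma leP_iff_not_ltP k a b : leP k a b <-> ~ ltP k b a.
Proof.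
  split.
  - intros [h|h] h2. eapply ltP_asym; eauto. eapply ltP_eqP; eauto. intros i hi; symmetry; auto.
  - intro h. destruct (ltP_total k a b) as [H|[H|H]]. left; auto. right; auto. contradiction.
Qed.

Lemma ltP_mono k k' a b : k <= k' -> ltP k a b -> ltP k' a b.
Proof. intros hk [j [hj r]]. exists j; split; [lia|auto]. Qed.

Lemma eqP_mono k k' a b : k <= k' -> eqP k' a b -> eqP k a b.
Proof. intros hk E i hi. apply E; lia. Qed.

Lemma leP_mono_down k k' a b : k <= k' -> leP k' a b -> leP k a b.
Proof.
  intros hk [h|h].
  - destruct (ltP_total k a b) as [H|[H|H]]; [left|right|]; auto.
    exfalso. apply (ltP_asym k' a b); auto. eapply ltP_mono; eauto.
  - right. eapply eqP_mono; eauto.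
Qed.

Definition upd (s : nat -> A) (k : nat) (x : A) : nat -> A :=
  fun i => if Nat.eqb i k then x else s i.

Lemma upd_eqP k s x : eqP k (upd s k x) s.
Proof. intros i hi. unfold upd. destruct (Nat.eqb_spec i k); [lia|auto]. Qed.

Lemma ltP_upd k a s x : eqP k a s -> ltA (a k) x -> ltP (S k) a (upd s k x).
Proof.
  intros E l. exists k; repeat split; auto.
  - intros i hi. unfold upd. destruct (Nat.eqb_spec i k); [lia|]. apply E; auto.
  - unfold upd. rewrite Nat.eqb_refl. auto.
Qed.

Lemma ltP_upd_l k a s x : eqP k a s -> ltA x (a k) -> ltP (S k) (upd s k x) a.
Proof.
  intros E l. exists k; repeat split; auto.
  - intros i hi. unfold upd. destruct (Nat.eqb_spec i k); [lia|]. symmetry; apply E; auto.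
  - unfold upd. rewrite Nat.eqb_refl. auto.
Qed.

Lemma ltP_upd_upd k s x y : ltA x y -> ltP (S k) (upd s k x) (upd s k y).
Proof.
  intros l. exists k; repeat split; auto.
  - intros i hi. unfold upd. destruct (Nat.eqb_spec i k); [lia|]. auto.
  - unfold upd. rewrite Nat.eqb_refl. auto.
Qed.

Definition ltF (a b : nat -> A) := exists j, (forall i, i < j -> a i = b i) /\ ltA (a j) (b j).

Lemma ltF_ltP a b : ltF a b <-> exists k, ltP k a b.
Proof.
  split.
  - intros [j [e l]]. exists (S j), j; auto.
  - intros [k [j [_ r]]]. exists j; auto.
Qed.

Lemma ltF_irrefl a : ~ ltF a a.
Proof. intros [j [_ l]]. eapply ltA_irrefl; eauto. Qed.

Lemma ltF_trans a b c : ltF a b -> ltF b c -> ltF a c.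
Proof.
  intros h1 h2. apply ltF_ltP in h1 as [k1 h1]. apply ltF_ltP in h2 as [k2 h2].
  apply ltF_ltP. exists (k1 + k2). apply ltP_trans with b.
  - apply (ltP_mono k1); [lia|auto].
  - apply (ltP_mono k2); [lia|auto].
Qed.

Lemma ltF_eq_l a b c : (forall i, a i = b i) -> ltF b c -> ltF a c.
Proof. intros E [j [e l]]. exists j; split. intros; rewrite E; auto. rewrite E; auto. Qed.
Lemma ltF_eq_r a b c : ltF a b -> (forall i, b i = c i) -> ltF a c.
Proof. intros [j [e l]] E. exists j; split. intros; rewrite <- E; auto. rewrite <- E; auto. Qed.

Lemma ltF_total a b : ltF a b \/ (forall i, a i = b i) \/ ltF b a.
Proof.
  destruct (classic (exists i, a i <> b i)) as [H|H].
  - destruct (least_nat _ H) as [j [hne hmin]].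
    assert (He: forall i, i < j -> a i = b i).
    { intros i hi. apply NNPP; intro N. apply (hmin i hi); auto. }
    destruct (ltA_total (a j) (b j)) as [l|[l|l]].
    + left; exists j; auto.
    + contradiction.
    + right; right; exists j; split; auto. intros; symmetry; auto.
  - right; left. intros i. apply NNPP; intro N; apply H; eauto.
Qed.

Lemma ltF_cons a b : ltF a b <-> ltA (a 0) (b 0) \/ (a 0 = b 0 /\ ltF (fun i => a (S i)) (fun i => b (S i))).
Proof.
  split.
  - intros [j [e l]]. destruct j as [|j].
    + left; auto.
    + right; split. apply e; lia. exists j; split; auto. intros i hi; apply e; lia.
  - intros [l|[E [j [e l]]]].
    + exists 0; split; auto. intros; lia.
    + exists (S j); split; auto. intros [|i] hi; auto. apply e; lia.
Qed.

Definition ltL (n m : nat -> nat) := exists j, n j < m j /\ forall i, j < i -> n i = m i.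

Lemma ltL_irrefl n : ~ ltL n n.
Proof. intros [j [h _]]; lia. Qed.

Lemma ltL_trans n m p : ltL n m -> ltL m p -> ltL n p.
Proof.
  intros [j1 [l1 e1]] [j2 [l2 e2]].
  destruct (lt_eq_lt_dec j1 j2) as [[H|H]|H].
  - exists j2; split. rewrite e1 by lia; auto. intros i hi; rewrite e1 by lia; auto.
  - subst. exists j2; split. lia. intros i hi; rewrite e1 by lia; auto.
  - exists j1; split. rewrite <- e2 by lia; auto. intros i hi; rewrite e1 by lia; apply e2; lia.
Qed.

Lemma ltL_eq_l n m p : (forall i, n i = m i) -> ltL m p -> ltL n p.
Proof. intros E [j [l e]]. exists j; split. rewrite E; auto. intros; rewrite E; auto. Qed.
Lemma ltL_eq_r n m p : ltL n m -> (forall i, m i = p i) -> ltL n p.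
Proof. intros [j [l e]] E. exists j; split. rewrite <- E; auto. intros; rewrite <- E; auto. Qed.

Lemma ltL_total n m : (exists K, forall k, K <= k -> n k = m k) ->
  ltL n m \/ (forall i, n i = m i) \/ ltL m n.
Proof.
  intros [K HK].
  destruct (classic (exists i, n i <> m i)) as [H|H].
  - assert (Hl: forall K, (forall k, K <= k -> n k = m k) -> exists j, n j <> m j /\ forall i, j < i -> n i = m i).
    { clear HK. intro K0. induction K0 as [|K0 IH]; intro HK.
      - exfalso. destruct H as [i Hi]. apply Hi, HK; lia.
      - destruct (Nat.eq_dec (n K0) (m K0)) as [E|E].
        + apply IH. intros k hk. destruct (Nat.eq_dec k K0). subst; auto. apply HK; lia.
        + exists K0; split; [auto|]. intros i hi; apply HK; lia. }
    destruct (Hl K HK) as [j [hne he]].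
    destruct (lt_eq_lt_dec (n j) (m j)) as [[l|l]|l].
    + left; exists j; auto.
    + contradiction.
    + right; right; exists j; split; auto. intros; symmetry; auto.
  - right; left. intros i. apply NNPP; intro N; apply H; eauto.
Qed.

Record pt := mkpt { pa : nat -> A; pn : nat -> nat }.

Definition ptlt (p q : pt) := ltF (pa p) (pa q) \/ ((forall i, pa p i = pa q i) /\ ltL (pn p) (pn q)).

Definition Lam (j : bool) (a : nat -> A) := exists K, forall k, K <= k -> side (a k) = xorb (Nat.even k) j.
Definition Qs (j : bool) (k : nat) : nat := if xorb (Nat.even k) j then 0 else 1.
Definition Mu (j : bool) (n : nat -> nat) := exists K, forall k, K <= k -> n k = Qs j k.
Definition Good (e : bool) (p : pt) := exists j1 j2, Lam j1 (pa p) /\ Mu j2 (pn p) /\ xorb j1 j2 = e.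

Lemma even_S k : Nat.even (S k) = negb (Nat.even k).
Proof. rewrite Nat.even_succ, <- Nat.negb_even. reflexivity. Qed.

Lemma Lam_uniq j j' a : Lam j a -> Lam j' a -> j = j'.
Proof.
  intros [K1 H1] [K2 H2]. specialize (H1 (K1+K2)); specialize (H2 (K1+K2)).
  rewrite H1 in H2 by lia. destruct j, j', (Nat.even (K1+K2)); simpl in *; auto; lia.
Qed.
Lemma Lam_ext j a b : (forall i, a i = b i) -> Lam j a -> Lam j b.
Proof. intros E [K H]. exists K; intros; rewrite <- E; auto. Qed.
Lemma Mu_uniq j j' n : Mu j n -> Mu j' n -> j = j'.
Proof.
  intros [K1 H1] [K2 H2]. specialize (H1 (K1+K2)); specialize (H2 (K1+K2)).
  rewrite H1 in H2 by lia. unfold Qs in H2.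
  destruct j, j', (Nat.even (K1+K2)); simpl in *; auto; lia.
Qed.
Lemma Mu_ext j n m : (forall i, n i = m i) -> Mu j n -> Mu j m.
Proof. intros E [K H]. exists K; intros; rewrite <- E; auto. Qed.
Lemma Mu_ev j n m : Mu j n -> Mu j m -> exists K, forall k, K <= k -> n k = m k.
Proof. intros [K1 H1] [K2 H2]. exists (K1+K2); intros. rewrite H1, H2 by lia; auto. Qed.
Lemma Mu_mod j n m : Mu j n -> (exists K, forall k, K <= k -> n k = m k) -> Mu j m.
Proof. intros [K1 H1] [K2 H2]. exists (K1+K2); intros. rewrite <- H2 by lia; auto with arith. apply H1; lia. Qed.

Lemma Lam_tail j a : Lam j (fun i => a (S i)) <-> Lam (negb j) a.
Proof.
  split.
  - intros [K H]. exists (S K). intros [|k] hk; [lia|]. rewrite H by lia.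
    rewrite even_S. destruct j, (Nat.even k); auto.
  - intros [K H]. exists K. intros k hk. rewrite H by lia.
    rewrite even_S. destruct j, (Nat.even k); auto.
Qed.

Lemma Mu_tail j n : Mu j (fun i => n (S i)) <-> Mu (negb j) n.
Proof.
  unfold Qs. split.
  - intros [K H]. exists (S K). intros [|k] hk; [lia|]. rewrite H by lia.
    unfold Qs; rewrite even_S. destruct j, (Nat.even k); auto.
  - intros [K H]. exists K. intros k hk. rewrite H by lia.
    unfold Qs; rewrite even_S. destruct j, (Nat.even k); auto.
Qed.

Lemma ptlt_irrefl p : ~ ptlt p p.
Proof. intros [h|[_ h]]. eapply ltF_irrefl; eauto. eapply ltL_irrefl; eauto. Qed.

Lemma ptlt_trans p q r : ptlt p q -> ptlt q r -> ptlt p r.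
Proof.
  intros [h1|[e1 h1]] [h2|[e2 h2]].
  - left; eapply ltF_trans; eauto.
  - left; eapply ltF_eq_r; eauto.
  - left; eapply ltF_eq_l; eauto.
  - right; split. intros; rewrite e1; auto. eapply ltL_trans; eauto.
Qed.

Lemma pt_eq p q : (forall i, pa p i = pa q i) -> (forall i, pn p i = pn q i) -> p = q.
Proof.
  destruct p as [a n], q as [b m]; simpl; intros E1 E2.
  apply functional_extensionality in E1. apply functional_extensionality in E2. subst; auto.
Qed.

Definition Zc (e : bool) := {p : pt | Good e p}.
Definition Zlt e (x y : Zc e) := ptlt (proj1_sig x) (proj1_sig y).

Lemma sig_ext e (x y : Zc e) : proj1_sig x = proj1_sig y -> x = y.
Proof. destruct x, y; simpl; intro; subst; f_equal; apply proof_irrelevance. Qed.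

Lemma Z_total e (x y : Zc e) : Zlt e x y \/ x = y \/ Zlt e y x.
Proof.
  destruct x as [p Hp], y as [q Hq]. unfold Zlt; simpl.
  destruct (ltF_total (pa p) (pa q)) as [h|[h|h]].
  - left; left; auto.
  - destruct Hp as [j1 [j2 [L1 [M1 X1]]]], Hq as [j1' [j2' [L1' [M1' X1']]]].
    assert (j1 = j1'). { apply (Lam_uniq j1 j1' (pa q)); [|auto]. eapply Lam_ext; eauto. }
    subst j1'. assert (j2 = j2'). { destruct j1, j2, j2'; simpl in *; congruence. }
    subst j2'. destruct (ltL_total (pn p) (pn q)) as [g|[g|g]].
    + eapply Mu_ev; eauto.
    + left; right; auto.
    + right; left. apply sig_ext; simpl. apply pt_eq; auto.
    + right; right; right; split; try (intros; symmetry; auto); auto.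
  - right; right; left; auto.
Qed.

Definition Z (e : bool) : LinOrd :=
  {| carrier := Zc e; lt := Zlt e;
     lt_irrefl := fun x => ptlt_irrefl (proj1_sig x);
     lt_trans := fun x y z => ptlt_trans (proj1_sig x) (proj1_sig y) (proj1_sig z);
     lt_total := Z_total e |}.

Definition za {e} (u : Z e) := pa (proj1_sig u).
Definition zn {e} (u : Z e) := pn (proj1_sig u).

Definition consA (x : A) (a : nat -> A) : nat -> A := fun i => match i with 0 => x | S i => a i end.
Definition consN (x : nat) (a : nat -> nat) : nat -> nat := fun i => match i with 0 => x | S i => a i end.

Lemma xorb_negb_l a b : xorb (negb a) b = negb (xorb a b).
Proof. destruct a, b; auto. Qed.

Lemma Good_tailA e p : Good e p -> Good (negb e) (mkpt (fun i => pa p (S i)) (pn p)).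
Proof.
  intros [j1 [j2 [L [M X]]]]. exists (negb j1), j2. simpl. repeat split; auto.
  - apply Lam_tail. rewrite negb_involutive; auto.
  - rewrite xorb_negb_l, X; auto.
Qed.
Lemma Good_consA e x p : Good (negb e) p -> Good e (mkpt (consA x (pa p)) (pn p)).
Proof.
  intros [j1 [j2 [L [M X]]]]. exists (negb j1), j2. simpl. repeat split; auto.
  - apply Lam_tail. exact L.
  - rewrite xorb_negb_l, X, negb_involutive; auto.
Qed.
Lemma Good_tailN e p : Good e p -> Good (negb e) (mkpt (pa p) (fun i => pn p (S i))).
Proof.
  intros [j1 [j2 [L [M X]]]]. exists j1, (negb j2). simpl. repeat split; auto.
  - apply Mu_tail. rewrite negb_involutive; auto.
  - rewrite xorb_comm, xorb_negb_l, xorb_comm, X; auto.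
Qed.
Lemma Good_consN e c p : Good (negb e) p -> Good e (mkpt (pa p) (consN c (pn p))).
Proof.
  intros [j1 [j2 [L [M X]]]]. exists j1, (negb j2). simpl. repeat split; auto.
  - apply Mu_tail. exact M.
  - rewrite xorb_comm, xorb_negb_l, xorb_comm, X, negb_involutive; auto.
Qed.

Definition phiA e (u : Z e) : lexprod A (Z (negb e)) :=
  (pa (proj1_sig u) 0,
   exist _ (mkpt (fun i => pa (proj1_sig u) (S i)) (pn (proj1_sig u))) (Good_tailA e _ (proj2_sig u))).

Definition phiN e (u : Z e) : lexprod (Z (negb e)) omega :=
  (exist _ (mkpt (pa (proj1_sig u)) (fun i => pn (proj1_sig u) (S i))) (Good_tailN e _ (proj2_sig u)),
   pn (proj1_sig u) 0).

Lemma eq_cons {T} (a b : nat -> T) : (forall i, a i = b i) <-> a 0 = b 0 /\ forall i, a (S i) = b (S i).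
Proof. split. intro h; auto. intros [h0 h] [|i]; auto. Qed.

Lemma ltL_cons n m : ltL n m <-> ltL (fun i => n (S i)) (fun i => m (S i)) \/
                               ((forall i, n (S i) = m (S i)) /\ n 0 < m 0).
Proof.
  split.
  - intros [j [l e]]. destruct j as [|j].
    + right; split; auto. intros i; apply e; lia.
    + left. exists j; split; auto. intros i hi; apply e; lia.
  - intros [[j [l e]]|[E l]].
    + exists (S j); split; auto. intros [|i] hi; [lia|]. apply e; lia.
    + exists 0; split; auto. intros [|i] hi; [lia|]. auto.
Qed.

Lemma iso_A e : iso (Z e) (lexprod A (Z (negb e))).
Proof.
  exists (phiA e). split; [|split].
  - intros [x v]. exists (exist _ (mkpt (consA x (pa (proj1_sig v))) (pn (proj1_sig v)))
                                 (Good_consA e x _ (proj2_sig v))).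
    unfold phiA; simpl. f_equal. apply sig_ext. simpl. destruct v as [[a n] Hv]; simpl; reflexivity.
  - intros u v E. unfold phiA in E.
    pose proof (f_equal fst E) as E1. pose proof (f_equal (fun z => proj1_sig (snd z)) E) as E2.
    simpl in E1, E2. injection E2 as E2 E3.
    apply sig_ext. apply pt_eq.
    + intros [|i]; auto. apply (f_equal (fun f => f i)) in E2. auto.
    + intros i. rewrite E3; auto.
  - intros u v. destruct u as [[a n] hu], v as [[b m] hv].
    simpl. unfold Zlt, lex_lt, ptlt; simpl. unfold Zlt, ptlt; simpl.
    split.
    + intros [h|[E h]].
      * apply ltF_cons in h as [h|[h0 h]]; [left|right]; auto.
      * right; split; [auto|]. right; split; auto.
    + intros [h|[h0 [h|[E h]]]].
      * left; apply ltF_cons; auto.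
      * left; apply ltF_cons; right; auto.
      * right; split; auto. apply eq_cons; auto.
Qed.

Lemma iso_N e : iso (Z e) (lexprod (Z (negb e)) omega).
Proof.
  exists (phiN e). split; [|split].
  - intros [v c]. exists (exist _ (mkpt (pa (proj1_sig v)) (consN c (pn (proj1_sig v))))
                                 (Good_consN e c _ (proj2_sig v))).
    unfold phiN; simpl. f_equal. apply sig_ext. simpl. destruct v as [[a n] Hv]; simpl; reflexivity.
  - intros u v E. unfold phiN in E.
    pose proof (f_equal snd E) as E1. pose proof (f_equal (fun z => proj1_sig (fst z)) E) as E2.
    simpl in E1, E2. injection E2 as E2 E3.
    apply sig_ext. apply pt_eq.
    + intros i. rewrite E2; auto.
    + intros [|i]; auto. apply (f_equal (fun f => f i)) in E3. auto.
  - intros u v. destruct u as [[a n] hu], v as [[b m] hv].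
    simpl. unfold Zlt, lex_lt, ptlt; simpl. unfold Zlt, ptlt; simpl.
    split.
    + intros [h|[E h]].
      * left; left; auto.
      * apply ltL_cons in h as [h|[E2 h]].
        -- left; right; auto.
        -- right; split; auto. apply sig_ext; simpl. apply pt_eq; simpl; auto.
    + intros [[h|[E h]]|[E h]].
      * left; auto.
      * right; split; auto. apply ltL_cons; auto.
      * apply (f_equal (@proj1_sig pt (Good (negb e)))) in E. simpl in E. injection E as E1 E2.
        right; split. rewrite E1; auto. apply ltL_cons; right; split; auto.
        intros i. apply (f_equal (fun f => f i)) in E2. auto.
Qed.

Definition IP (T : LinOrd) (P : T -> Prop) (v u : T) :=
  P v /\ lt v u /\ forall w, P w -> lt v w -> lt w u -> False.
Definition Dset (T : LinOrd) (P : T -> Prop) (u : T) := P u /\ ~ exists v, IP T P v u.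
Fixpoint Dk (T : LinOrd) (k : nat) : T -> Prop :=
  match k with 0 => fun _ => True | S k => Dset T (Dk T k) end.

Lemma IP_uniq (T : LinOrd) P (v v' u : T) : IP T P v u -> IP T P v' u -> v = v'.
Proof.
  intros [P1 [l1 H1]] [P2 [l2 H2]].
  destruct (lt_total T v v') as [h|[h|h]]; auto.
  - exfalso; exact (H1 v' P2 h l2).
  - exfalso; exact (H2 v P1 h l1).
Qed.

Lemma IP_ext (T : LinOrd) P P' (v u : T) : (forall x, P x <-> P' x) -> IP T P v u <-> IP T P' v u.
Proof.
  intros E. unfold IP. split; intros [a [b c]]; repeat split; auto; try apply E; auto.
  - intros w hw; apply c; apply E; auto.
  - intros w hw; apply c; apply E; auto.
Qed.

Lemma Dset_ext (T : LinOrd) P P' (u : T) : (forall x, P x <-> P' x) -> Dset T P u <-> Dset T P' u.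
Proof.
  intros E. unfold Dset. split; intros [a b]; split; try apply E; auto.
  - intros [v hv]; apply b; exists v; apply (IP_ext T P P'); auto.
  - intros [v hv]; apply b; exists v; apply (IP_ext T P P'); auto.
Qed.

Section IsoTransfer.
Variables T T' : LinOrd.
Variable f : T -> T'.
Hypothesis fsurj : forall y, exists x, f x = y.
Hypothesis fmono : forall x y, lt x y <-> lt (f x) (f y).

Lemma IP_iso P P' : (forall u, P u <-> P' (f u)) -> forall v u, IP T P v u <-> IP T' P' (f v) (f u).
Proof.
  intros E v u. unfold IP. split.
  - intros [a [b c]]. split; [apply E; auto|]. split; [apply fmono; auto|].
    intros w' hw l1 l2. destruct (fsurj w') as [w <-]. apply (c w).
    apply E; auto. apply fmono; auto. apply fmono; auto.
  - intros [a [b c]]. split; [apply E; auto|]. split; [apply fmono; auto|].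
    intros w hw l1 l2. apply (c (f w)). apply E; auto. apply fmono; auto. apply fmono; auto.
Qed.

Lemma Dset_iso P P' : (forall u, P u <-> P' (f u)) -> forall u, Dset T P u <-> Dset T' P' (f u).
Proof.
  intros E u. unfold Dset. split.
  - intros [a b]. split; [apply E; auto|]. intros [v' hv]. destruct (fsurj v') as [v <-].
    apply b. exists v. apply (IP_iso P P' E); auto.
  - intros [a b]. split; [apply E; auto|]. intros [v hv]. apply b. exists (f v).
    apply (IP_iso P P' E); auto.
Qed.

Lemma Dk_iso : forall k u, Dk T k u <-> Dk T' k (f u).
Proof.
  induction k; intro u; simpl. tauto. apply Dset_iso. auto.
Qed.
End IsoTransfer.

Definition Pk {e} (k : nat) (u : Z e) := forall i, i < k -> zn u i = 0.

Lemma Good_setn e p g : Good e p -> (exists K, forall k, K <= k -> pn p k = g k) -> Good e (mkpt (pa p) g).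
Proof.
  intros [j1 [j2 [L [M X]]]] H. exists j1, j2; simpl; repeat split; auto. eapply Mu_mod; eauto.
Qed.

Definition setn {e} (u : Z e) (g : nat -> nat) (H : exists K, forall k, K <= k -> zn u k = g k) : Z e :=
  exist _ (mkpt (za u) g) (Good_setn e (proj1_sig u) g (proj2_sig u) H).

Lemma za_setn e (u : Z e) g H : za (setn u g H) = za u.
Proof. reflexivity. Qed.
Lemma zn_setn e (u : Z e) g H : zn (setn u g H) = g.
Proof. reflexivity. Qed.

Lemma Zlt_unfold e (u v : Z e) : lt u v <-> ltF (za u) (za v) \/ ((forall i, za u i = za v i) /\ ltL (zn u) (zn v)).
Proof. reflexivity. Qed.

Lemma ltF_eqa a b : (forall i, a i = b i) -> ltF a b -> False.
Proof. intros E h. apply (ltF_irrefl b). apply (ltF_eq_l b a b); [intros; symmetry; auto|exact h]. Qed.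

Lemma ltL_gap (p w u : nat -> nat) k : (forall i, i <> k -> p i = u i) -> S (p k) = u k ->
  (forall i, i < k -> p i = w i) -> ltL p w -> ltL w u -> False.
Proof.
  intros H1 H2 H3 [j1 [l1 e1]] [j2 [l2 e2]].
  destruct (lt_eq_lt_dec j2 k) as [[c|c]|c].
  - pose proof (H1 j2 ltac:(lia)); pose proof (H3 j2 c); lia.
  - subst j2. destruct (lt_eq_lt_dec j1 k) as [[d|d]|d].
    + pose proof (H3 j1 d); lia.
    + subst; lia.
    + pose proof (e2 j1 d); pose proof (H1 j1 ltac:(lia)); lia.
  - destruct (lt_eq_lt_dec j1 j2) as [[d|d]|d].
    + pose proof (e1 j2 d); pose proof (H1 j2 ltac:(lia)); lia.
    + subst. pose proof (H1 j2 ltac:(lia)); lia.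
    + pose proof (e2 j1 d); pose proof (H1 j1 ltac:(lia)); lia.
Qed.

Lemma between_sameA e (v w u : Z e) : (forall i, za v i = za u i) -> lt v w -> lt w u ->
  (forall i, za v i = za w i) /\ ltL (zn v) (zn w) /\ ltL (zn w) (zn u).
Proof.
  intros E l1 l2. apply Zlt_unfold in l1, l2.
  destruct l1 as [l1|[E1 l1]].
  - exfalso. destruct l2 as [l2|[E2 l2]].
    + apply (ltF_irrefl (za u)). apply (ltF_trans _ (za w)); [|exact l2].
      apply (ltF_eq_l (za u) (za v) (za w)); [intros; symmetry; auto| exact l1].
    + apply (ltF_eqa (za v) (za w)); auto. intros i; transitivity (za u i); [apply E| symmetry; apply E2].
  - destruct l2 as [l2|[E2 l2]].
    + exfalso. apply (ltF_eqa (za w) (za u)); auto. intros i; transitivity (za v i); [symmetry; apply E1| apply E].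
    + auto.
Qed.

Section Pred.
Variable e : bool.

Lemma pred_ev (u : Z e) k c : exists K, forall i, K <= i -> zn u i = (fun i => if Nat.eqb i k then c else zn u i) i.
Proof. exists (S k). intros i hi. destruct (Nat.eqb_spec i k); [lia|auto]. Qed.

Definition predk (u : Z e) k c : Z e := setn u _ (pred_ev u k c).

Lemma IP_pred (u : Z e) k c : Pk k u -> zn u k = S c -> IP (Z e) (Pk k) (predk u k c) u.
Proof.
  intros Pu Hc. unfold IP. split; [|split].
  - intros i hi. unfold predk. rewrite zn_setn. destruct (Nat.eqb_spec i k); [lia|auto].
  - apply Zlt_unfold. right. split. intros; reflexivity.
    exists k. unfold predk; rewrite zn_setn. rewrite Nat.eqb_refl. split; [lia|].
    intros i hi. destruct (Nat.eqb_spec i k); [lia|auto].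
  - intros w Pw l1 l2. destruct (between_sameA e (predk u k c) w u (fun i => eq_refl) l1 l2) as [_ [h1 h2]].
    unfold predk in h1; rewrite zn_setn in h1.
    refine (ltL_gap _ _ _ k _ _ _ h1 h2).
    + intros i hi. destruct (Nat.eqb_spec i k); [lia|auto].
    + rewrite Nat.eqb_refl; auto.
    + intros i hi. destruct (Nat.eqb_spec i k); [lia|]. rewrite Pu, Pw; auto.
Qed.

Lemma Mu_pos (n : nat -> nat) j k : Mu j n -> exists i, k < i /\ n i <> 0.
Proof.
  intros [K H]. set (m := S (K + k)).
  destruct (xorb (Nat.even m) j) eqn:E.
  - exists (S m). split; [lia|]. rewrite H by lia. unfold Qs. rewrite even_S.
    destruct (Nat.even m), j; simpl in *; congruence.
  - exists m. split; [lia|]. rewrite H by lia. unfold Qs. rewrite E; auto.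
Qed.

Lemma noIP (u : Z e) k : Pk k u -> zn u k = 0 -> ~ exists v, IP (Z e) (Pk k) v u.
Proof.
  intros Pu H0 [v [Pv [l Hb]]]. apply Zlt_unfold in l as [l|[E l]].
  - destruct (proj2_sig u) as [j1 [j2 [_ [M _]]]].
    destruct (Mu_pos _ j2 k M) as [j [hj hne]].
    assert (Hev: exists K, forall i, K <= i -> zn u i = (fun i => if Nat.eqb i j then zn u j - 1 else zn u i) i).
    { exists (S j). intros i hi. destruct (Nat.eqb_spec i j); [lia|auto]. }
    apply (Hb (setn u _ Hev)).
    + intros i hi. rewrite zn_setn. destruct (Nat.eqb_spec i j); [lia|auto].
    + apply Zlt_unfold. left. rewrite za_setn. auto.
    + apply Zlt_unfold. right. split; [intros; reflexivity|].
      exists j. rewrite zn_setn, Nat.eqb_refl. split; [unfold zn in *; lia|].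
      intros i hi. destruct (Nat.eqb_spec i j); [lia|auto].
  - destruct l as [j [lj ej]].
    assert (hj: k < j).
    { destruct (lt_eq_lt_dec j k) as [[c|c]|c]; auto.
      - pose proof (Pv j c); pose proof (Pu j c); unfold zn in *; lia.
      - subst. unfold zn in *; lia. }
    assert (Hev: exists K, forall i, K <= i -> zn v i = (fun i => if Nat.eqb i k then S (zn v k) else zn v i) i).
    { exists (S k). intros i hi. destruct (Nat.eqb_spec i k); [lia|auto]. }
    apply (Hb (setn v _ Hev)).
    + intros i hi. rewrite zn_setn. destruct (Nat.eqb_spec i k); [lia|auto].
    + apply Zlt_unfold. right. split; [intros; reflexivity|].
      exists k. rewrite zn_setn, Nat.eqb_refl. split; [lia|].
      intros i hi. destruct (Nat.eqb_spec i k); [lia|auto].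
    + apply Zlt_unfold. right. split. rewrite za_setn; auto.
      exists j. rewrite zn_setn. destruct (Nat.eqb_spec j k); [lia|]. split; auto.
      intros i hi. destruct (Nat.eqb_spec i k); [lia|]. apply ej; auto.
Qed.

Lemma IP_val (u v : Z e) k : Pk k u -> IP (Z e) (Pk k) v u -> zn u k = S (zn v k).
Proof.
  intros Pu Hv. destruct (zn u k) as [|c] eqn:E.
  - exfalso. apply (noIP u k Pu E). eauto.
  - pose proof (IP_pred u k c Pu E) as H2.
    rewrite (IP_uniq _ _ _ _ _ Hv H2). unfold predk. rewrite zn_setn, Nat.eqb_refl. auto.
Qed.

Lemma Dset_Pk (u : Z e) k : Dset (Z e) (Pk k) u <-> Pk (S k) u.
Proof.
  split.
  - intros [Pu N]. intros i hi. destruct (Nat.eq_dec i k) as [->|ne]; [|apply Pu; lia].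
    destruct (zn u k) as [|c] eqn:E; auto. exfalso; apply N. exists (predk u k c). apply IP_pred; auto.
  - intros Pu. split. intros i hi; apply Pu; lia. apply noIP. intros i hi; apply Pu; lia. apply Pu; lia.
Qed.

Lemma Dk_char k (u : Z e) : Dk (Z e) k u <-> Pk k u.
Proof.
  revert u. induction k; intro u; simpl.
  - split; auto. intros _ i hi; lia.
  - rewrite (Dset_ext _ _ (Pk k)); auto. apply Dset_Pk.
Qed.

Lemma zk_ev (u : Z e) k : exists K, forall i, K <= i -> zn u i = (fun i => if Nat.ltb i k then 0 else zn u i) i.
Proof. exists k. intros i hi. destruct (Nat.ltb_spec i k); [lia|auto]. Qed.

Definition zk (u : Z e) k : Z e := setn u _ (zk_ev u k).

Definition IsMax k (u m : Z e) := Pk k m /\ ~ lt u m /\ forall w, Pk k w -> ~ lt u w -> ~ lt m w.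

Lemma zk_max (u : Z e) k : IsMax k u (zk u k).
Proof.
  unfold zk. split; [|split].
  - intros i hi. rewrite zn_setn. destruct (Nat.ltb_spec i k); [auto|lia].
  - intro l. apply Zlt_unfold in l as [l|[E l]].
    + apply (ltF_irrefl (za u)); auto.
    + destruct l as [j [lj ej]]. simpl in lj. unfold zn in lj. simpl in lj.
      destruct (Nat.ltb_spec j k); lia.
  - intros w Pw nl l. apply nl. apply Zlt_unfold in l as [l|[E l]].
    + apply Zlt_unfold; left; auto.
    + apply Zlt_unfold; right; split; auto.
      destruct l as [j [lj ej]]. unfold zn in lj, ej. simpl in lj, ej.
      destruct (Nat.ltb_spec j k).
      * pose proof (Pw j H). unfold zn in *; lia.
      * exists j; split; auto. intros i hi. specialize (ej i hi).
        destruct (Nat.ltb_spec i k); [lia|auto].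
Qed.

Lemma IsMax_uniq k (u m1 m2 : Z e) : IsMax k u m1 -> IsMax k u m2 -> m1 = m2.
Proof.
  intros [P1 [n1 H1]] [P2 [n2 H2]].
  destruct (lt_total (Z e) m1 m2) as [h|[h|h]]; auto.
  - exfalso; exact (H1 m2 P2 n2 h).
  - exfalso; exact (H2 m1 P1 n1 h).
Qed.
End Pred.

Section NRigid.
Variables e e' : bool.
Variable f : Z e -> Z e'.
Hypothesis fsurj : forall y, exists x, f x = y.
Hypothesis fmono : forall x y, lt x y <-> lt (f x) (f y).

Lemma pres_P k u : Pk k u <-> Pk k (f u).
Proof.
  rewrite <- Dk_char, <- Dk_char. apply Dk_iso; auto.
Qed.

Lemma pres_k k c : forall u, Pk k u -> zn u k = c -> zn (f u) k = c.
Proof.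
  induction c as [|c IH]; intros u Pu Hc.
  - assert (Pk (S k) u). { intros i hi. destruct (Nat.eq_dec i k); subst; auto. apply Pu; lia. }
    apply pres_P in H. apply H; lia.
  - pose proof (IP_pred e u k c Pu Hc) as Hip.
    assert (Hv: zn (predk e u k c) k = c). { unfold predk; rewrite zn_setn, Nat.eqb_refl; auto. }
    apply (IP_iso _ _ f fsurj fmono (Pk k) (Pk k) (pres_P k)) in Hip.
    rewrite (IP_val e' (f u) (f (predk e u k c)) k); [|apply pres_P; auto|exact Hip].
    f_equal. apply IH; auto. destruct Hip as [Pv _]. apply pres_P. exact Pv.
Qed.

Lemma pres_n u k : zn (f u) k = zn u k.
Proof.
  assert (E: f (zk e u k) = zk e' (f u) k).
  { apply (IsMax_uniq e' k (f u)); [|apply zk_max].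
    destruct (zk_max e u k) as [P1 [n1 H1]]. split; [|split].
    - apply pres_P; auto.
    - intro l. apply n1, fmono; auto.
    - intros w' Pw nl l. destruct (fsurj w') as [w <-]. apply (H1 w).
      + apply pres_P; auto.
      + intro l2; apply nl, fmono; auto.
      + apply fmono; auto. }
  assert (Hz: zn (zk e' (f u) k) k = zn (f u) k).
  { unfold zk. rewrite zn_setn. destruct (Nat.ltb_spec k k); [lia|auto]. }
  rewrite <- Hz, <- E. apply pres_k.
  - apply zk_max.
  - unfold zk. rewrite zn_setn. destruct (Nat.ltb_spec k k); [lia|auto].
Qed.
End NRigid.

Hypothesis HW : is_omega1 W.

Lemma club (T T' : Type) (g : T -> T') (P : W -> T -> Prop) (Q : W -> T' -> Prop) :
  (forall w1 w2 t, lt w1 w2 -> P w1 t -> P w2 t) ->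
  (forall w1 w2 t, lt w1 w2 -> Q w1 t -> Q w2 t) ->
  (forall (s : nat -> W) l, (forall n, lt (s n) (s (S n))) -> (forall n, lt (s n) l) ->
      (forall v, lt v l -> exists n, lt v (s n)) -> forall t, P l t -> exists n, P (s n) t) ->
  (forall (s : nat -> W) l, (forall n, lt (s n) (s (S n))) -> (forall n, lt (s n) l) ->
      (forall v, lt v l -> exists n, lt v (s n)) -> forall t, Q l t -> exists n, Q (s n) t) ->
  (forall w, exists w', forall t, P w t -> Q w' (g t)) ->
  (forall w', exists w, forall t, Q w' (g t) -> P w t) ->
  exists w w', forall t, P w t <-> Q w' (g t).
Proof.
  intros mP mQ cP cQ bF bG.
  set (F := fun w => proj1_sig (constructive_indefinite_description _ (bF w))).
  set (G := fun w => proj1_sig (constructive_indefinite_description _ (bG w))).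
  assert (HF : forall w t, P w t -> Q (F w) (g t)).
  { intros w t h. exact (proj2_sig (constructive_indefinite_description _ (bF w)) t h). }
  assert (HG : forall w t, Q w (g t) -> P (G w) t).
  { intros w t h. exact (proj2_sig (constructive_indefinite_description _ (bG w)) t h). }
  set (nx := fun w => proj1_sig (constructive_indefinite_description _ (W_nomax W HW w))).
  assert (Hnx : forall w, lt w (nx w)).
  { intro w. exact (proj2_sig (constructive_indefinite_description _ (W_nomax W HW w))). }
  set (mx := fun x y : W => if excluded_middle_informative (lt x y) then y else x).
  assert (Hmx1 : forall x y, lt x (nx (mx x y))).
  { intros x y. unfold mx. destruct (excluded_middle_informative (lt x y)).
    eapply lt_trans; eauto. auto. }
  assert (Hmx2 : forall x y, lt y (nx (mx x y))).
  { intros x y. unfold mx. destruct (excluded_middle_informative (lt x y)). auto.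
    destruct (lt_total W x y) as [h|[h|h]]. contradiction. subst; auto. eapply lt_trans; eauto. }
  destruct (W_inh W HW) as [w0].
  set (sq := nat_rect (fun _ => (W * W)%type) (w0, nx (F w0))
               (fun n p => let w1 := nx (mx (fst p) (G (snd p))) in (w1, nx (mx (snd p) (F w1))))).
  assert (H1 : forall n, lt (fst (sq n)) (fst (sq (S n)))). { intro n. simpl. apply Hmx1. }
  assert (H2 : forall n, lt (G (snd (sq n))) (fst (sq (S n)))). { intro n. simpl. apply Hmx2. }
  assert (H3 : forall n, lt (F (fst (sq n))) (snd (sq n))).
  { intros [|n]; simpl. apply Hnx. apply Hmx2. }
  assert (H4 : forall n, lt (snd (sq n)) (snd (sq (S n)))). { intro n. simpl. apply Hmx1. }
  destruct (W_lub W HW (fun n => fst (sq n)) H1) as [l [Hl1 Hl2]].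
  destruct (W_lub W HW (fun n => snd (sq n)) H4) as [l' [Hl1' Hl2']].
  exists l, l'. intro t. split.
  - intro h. destruct (cP _ l H1 Hl1 Hl2 t h) as [n hn]. apply HF in hn.
    apply (mQ (F (fst (sq n))) l'); auto. eapply lt_trans; [apply H3|apply Hl1'].
  - intro h. destruct (cQ _ l' H4 Hl1' Hl2' (g t) h) as [n hn]. apply HG in hn.
    apply (mP (G (snd (sq n))) l); auto. eapply lt_trans; [apply H2|apply Hl1].
Qed.

Definition w0 : W := epsilon (W_inh W HW) (fun _ => True).
Definition patA (i : nat) : A := if Nat.even i then inr w0 else inl w0.

Lemma Good_ext e (b : nat -> A) K :
  Good e (mkpt (fun i => if Nat.ltb i K then b i else patA i) (Qs e)).
Proof.
  exists false, e. simpl. repeat split.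
  - exists K. intros k hk. destruct (Nat.ltb_spec k K); [lia|]. unfold patA.
    destruct (Nat.even k); auto.
  - exists 0. auto.
Qed.

Definition extP e (b : nat -> A) K : Z e := exist _ _ (Good_ext e b K).

Lemma za_extP e b K i : i < K -> za (extP e b K) i = b i.
Proof. intro h. unfold za, extP; simpl. destruct (Nat.ltb_spec i K); [auto|lia]. Qed.

Lemma upd_ne s k x i : i <> k -> upd s k x i = s i.
Proof. intro h. unfold upd. destruct (Nat.eqb_spec i k); [lia|auto]. Qed.
Lemma upd_eq s k x : upd s k x k = x.
Proof. unfold upd. rewrite Nat.eqb_refl; auto. Qed.

Lemma ltP_updR a s k x : ltP (S k) a (upd s k x) <-> ltP k a s \/ (eqP k a s /\ ltA (a k) x).
Proof.
  split.
  - intros [j [hj [e l]]]. destruct (Nat.eq_dec j k) as [->|ne].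
    + right; split. intros i hi. rewrite e by auto. apply upd_ne; lia. rewrite upd_eq in l; auto.
    + left. exists j; repeat split; [lia| |].
      * intros i hi. rewrite e by auto. apply upd_ne; lia.
      * rewrite upd_ne in l; auto.
  - intros [h|[E l]].
    + apply (ltP_mono k); [lia|]. apply (ltP_eqP_r _ _ s); auto.
      intros i hi. symmetry. apply upd_ne; lia.
    + apply ltP_upd; auto.
Qed.

Lemma ltP_updL a s k x : ltP (S k) (upd s k x) a <-> ltP k s a \/ (eqP k s a /\ ltA x (a k)).
Proof.
  split.
  - intros [j [hj [e l]]]. destruct (Nat.eq_dec j k) as [->|ne].
    + right; split. intros i hi. rewrite <- e by auto. symmetry; apply upd_ne; lia. rewrite upd_eq in l; auto.
    + left. exists j; repeat split; [lia| |].
      * intros i hi. rewrite <- e by auto. symmetry; apply upd_ne; lia.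
      * rewrite upd_ne in l; auto.
  - intros [h|[E l]].
    + apply (ltP_mono k); [lia|]. apply (ltP_eqP_l _ _ s); auto.
      intros i hi. apply upd_ne; lia.
    + apply ltP_upd_l; auto. intros i hi; symmetry; auto.
Qed.

Lemma Zlt_leP e (u v : Z e) m : lt u v -> leP m (za u) (za v).
Proof.
  intro l. apply Zlt_unfold in l as [[j [ej lj]]|[E _]].
  - destruct (Nat.lt_ge_cases j m).
    + left. exists j; repeat split; auto.
    + right. intros i hi. apply ej; lia.
  - right. intros i hi; apply E.
Qed.

Lemma ltP_Zlt e (u v : Z e) m : ltP m (za u) (za v) -> lt u v.
Proof. intro h. apply Zlt_unfold. left. apply ltF_ltP. eauto. Qed.

Lemma eqP_sym k a b : eqP k a b -> eqP k b a.
Proof. intros E i hi; symmetry; auto. Qed.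

Lemma boundTB e e' (g : Z e -> Z e') (gm : forall u v, lt u v -> lt (g u) (g v)) k s s'
  (Ht : forall u, leP k (za u) s -> leP k (za (g u)) s') :
  forall w, exists w', forall u, ltP (S k) (za u) (upd s k (inr w)) -> ltP (S k) (za (g u)) (upd s' k (inr w')).
Proof.
  intro w. set (u0 := extP e (upd s k (inr w)) (S k)).
  assert (E0 : eqP (S k) (za u0) (upd s k (inr w))). { intros i hi. apply za_extP; auto. }
  assert (H0 : leP k (za (g u0)) s').
  { apply Ht. right. intros i hi. rewrite E0 by lia. apply upd_ne; lia. }
  assert (Hw : exists w', ltP (S k) (za (g u0)) (upd s' k (inr w'))).
  { destruct H0 as [h|h].
    - exists w. apply ltP_updR. left; auto.
    - destruct (za (g u0) k) as [z|w1] eqn:Ek.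
      + exists w. apply ltP_updR. right; split; auto. rewrite Ek. exact I.
      + destruct (W_nomax W HW w1) as [w' hw']. exists w'. apply ltP_updR. right; split; auto.
        rewrite Ek. exact hw'. }
  destruct Hw as [w' Hw']. exists w'. intros u hu.
  apply (leP_ltP_trans _ _ (za (g u0))); auto.
  apply Zlt_leP. apply gm. apply (ltP_Zlt _ _ _ (S k)).
  apply (ltP_eqP_r _ _ (upd s k (inr w))); auto. apply eqP_sym; auto.
Qed.

Lemma boundBT e e' (g : Z e -> Z e') (gm : forall u v, lt u v -> lt (g u) (g v)) k s s'
  (Ht : forall u, leP k s (za u) -> leP k s' (za (g u))) :
  forall z, exists z', forall u, ltP (S k) (upd s k (inl z)) (za u) -> ltP (S k) (upd s' k (inl z')) (za (g u)).
Proof.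
  intro z. set (u0 := extP e (upd s k (inl z)) (S k)).
  assert (E0 : eqP (S k) (za u0) (upd s k (inl z))). { intros i hi. apply za_extP; auto. }
  assert (H0 : leP k s' (za (g u0))).
  { apply Ht. right. intros i hi. rewrite E0 by lia. symmetry; apply upd_ne; lia. }
  assert (Hw : exists z', ltP (S k) (upd s' k (inl z')) (za (g u0))).
  { destruct H0 as [h|h].
    - exists z. apply ltP_updL. left; auto.
    - destruct (za (g u0) k) as [z1|w1] eqn:Ek.
      + destruct (W_nomax W HW z1) as [z' hz']. exists z'. apply ltP_updL. right; split; auto.
        rewrite Ek. exact hz'.
      + exists z. apply ltP_updL. right; split; auto. rewrite Ek. exact I. }
  destruct Hw as [z' Hz']. exists z'. intros u hu.
  apply (ltP_leP_trans _ _ (za (g u0))); auto.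
  apply Zlt_leP. apply gm. apply (ltP_Zlt _ _ _ (S k)).
  exact (ltP_eqP_l (S k) (za u0) (upd s k (inl z)) (za u) E0 hu).
Qed.

Section Match.
Variables e e' : bool.
Variable f : Z e -> Z e'.
Variable finv : Z e' -> Z e.
Hypothesis Hfi : forall v, f (finv v) = v.
Hypothesis Hif : forall u, finv (f u) = u.
Hypothesis fm : forall u v, lt u v <-> lt (f u) (f v).

Definition TopM k s s' := forall u, leP k (za u) s <-> leP k (za (f u)) s'.
Definition BotM k s s' := forall u, leP k s (za u) <-> leP k s' (za (f u)).

Lemma finv_m : forall u v, lt u v -> lt (finv u) (finv v).
Proof. intros u v h. apply fm. rewrite !Hfi. auto. Qed.

Lemma TB k s s' : TopM k s s' -> exists y y', BotM (S k) (upd s k (inr y)) (upd s' k (inr y')).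
Proof.
  intro HT.
  destruct (club (Z e) (Z e') f (fun w u => ltP (S k) (za u) (upd s k (inr w)))
                 (fun w v => ltP (S k) (za v) (upd s' k (inr w)))) as [y [y' H]].
  - intros w1 w2 t l h. eapply ltP_trans; [exact h|]. apply ltP_upd_upd. exact l.
  - intros w1 w2 t l h. eapply ltP_trans; [exact h|]. apply ltP_upd_upd. exact l.
  - intros sq l _ _ Hl t h. apply ltP_updR in h as [h|[E h]].
    + exists 0. apply ltP_updR. left; auto.
    + destruct (za t k) as [z|v] eqn:Ek.
      * exists 0. apply ltP_updR. right; split; auto. rewrite Ek; exact I.
      * destruct (Hl v h) as [n hn]. exists n. apply ltP_updR. right; split; auto. rewrite Ek; exact hn.
  - intros sq l _ _ Hl t h. apply ltP_updR in h as [h|[E h]].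
    + exists 0. apply ltP_updR. left; auto.
    + destruct (za t k) as [z|v] eqn:Ek.
      * exists 0. apply ltP_updR. right; split; auto. rewrite Ek; exact I.
      * destruct (Hl v h) as [n hn]. exists n. apply ltP_updR. right; split; auto. rewrite Ek; exact hn.
  - apply boundTB. intros; apply fm; auto. intros u; apply HT.
  - intros w'. destruct (boundTB e' e finv finv_m k s' s) with (w := w') as [w Hw].
    + intros v h. apply HT. rewrite Hfi. auto.
    + exists w. intros t h. rewrite <- (Hif t). apply Hw. auto.
  - exists y, y'. intro u. rewrite !leP_iff_not_ltP. rewrite H. tauto.
Qed.

Lemma BT k s s' : BotM k s s' -> exists z z', TopM (S k) (upd s k (inl z)) (upd s' k (inl z')).
Proof.
  intro HB.
  destruct (club (Z e) (Z e') f (fun w u => ltP (S k) (upd s k (inl w)) (za u))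
                 (fun w v => ltP (S k) (upd s' k (inl w)) (za v))) as [y [y' H]].
  - intros w1 w2 t l h. eapply ltP_trans; [|exact h]. apply ltP_upd_upd. exact l.
  - intros w1 w2 t l h. eapply ltP_trans; [|exact h]. apply ltP_upd_upd. exact l.
  - intros sq l _ _ Hl t h. apply ltP_updL in h as [h|[E h]].
    + exists 0. apply ltP_updL. left; auto.
    + destruct (za t k) as [v|z] eqn:Ek.
      * destruct (Hl v h) as [n hn]. exists n. apply ltP_updL. right; split; auto. rewrite Ek; exact hn.
      * exists 0. apply ltP_updL. right; split; auto. rewrite Ek; exact I.
  - intros sq l _ _ Hl t h. apply ltP_updL in h as [h|[E h]].
    + exists 0. apply ltP_updL. left; auto.
    + destruct (za t k) as [v|z] eqn:Ek.
      * destruct (Hl v h) as [n hn]. exists n. apply ltP_updL. right; split; auto. rewrite Ek; exact hn.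
      * exists 0. apply ltP_updL. right; split; auto. rewrite Ek; exact I.
  - apply boundBT. intros; apply fm; auto. intros u; apply HB.
  - intros w'. destruct (boundBT e' e finv finv_m k s' s) with (z := w') as [w Hw].
    + intros v h. apply HB. rewrite Hfi. auto.
    + exists w. intros t h. rewrite <- (Hif t). apply Hw. auto.
  - exists y, y'. intro u. rewrite !leP_iff_not_ltP. rewrite H. tauto.
Qed.
End Match.

Lemma leP_eqP_r k a b c : eqP k b c -> leP k a b -> leP k a c.
Proof.
  intros E [h|h]. left; eapply ltP_eqP_r; eauto. right. intros i hi. rewrite h by auto. apply E; auto.
Qed.
Lemma leP_eqP_l k a b c : eqP k a b -> leP k b c -> leP k a c.
Proof.
  intros E [h|h]. left; eapply ltP_eqP_l; eauto. right. intros i hi. rewrite E by auto. apply h; auto.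
Qed.

Section Build.
Variables e e' : bool.
Variable f : Z e -> Z e'.
Variable finv : Z e' -> Z e.
Hypothesis Hfi : forall v, f (finv v) = v.
Hypothesis Hif : forall u, finv (f u) = u.
Hypothesis fm : forall u v, lt u v <-> lt (f u) (f v).

Lemma TopM_ext k s s' t t' : eqP k s t -> eqP k s' t' -> TopM e e' f k s s' -> TopM e e' f k t t'.
Proof.
  intros E E' H u. split; intro h.
  - apply (leP_eqP_r _ _ s'); auto. apply H. apply (leP_eqP_r _ _ t); auto. apply eqP_sym; auto.
  - apply (leP_eqP_r _ _ s); auto. apply H. apply (leP_eqP_r _ _ t'); auto. apply eqP_sym; auto.
Qed.
Lemma BotM_ext k s s' t t' : eqP k s t -> eqP k s' t' -> BotM e e' f k s s' -> BotM e e' f k t t'.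
Proof.
  intros E E' H u. split; intro h.
  - apply (leP_eqP_l _ _ s'); auto. apply eqP_sym; auto. apply H. apply (leP_eqP_l _ _ t); auto.
  - apply (leP_eqP_l _ _ s); auto. apply eqP_sym; auto. apply H. apply (leP_eqP_l _ _ t'); auto.
Qed.

Lemma step_ex k s s' : exists p : A * A,
  (Nat.even k = true -> TopM e e' f k s s' ->
     (side (fst p) = true /\ side (snd p) = true) /\ BotM e e' f (S k) (upd s k (fst p)) (upd s' k (snd p))) /\
  (Nat.even k = false -> BotM e e' f k s s' ->
     (side (fst p) = false /\ side (snd p) = false) /\ TopM e e' f (S k) (upd s k (fst p)) (upd s' k (snd p))).
Proof.
  destruct (Nat.even k) eqn:Ek.
  - destruct (classic (TopM e e' f k s s')) as [H|H].
    + destruct (TB e e' f finv Hfi Hif fm k s s' H) as [y [y' Hy]].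
      exists (inr y, inr y'). split; [|discriminate]. intros _ _. simpl. auto.
    + exists (inl w0, inl w0). split; [|discriminate]. intros _ h; contradiction.
  - destruct (classic (BotM e e' f k s s')) as [H|H].
    + destruct (BT e e' f finv Hfi Hif fm k s s' H) as [y [y' Hy]].
      exists (inl y, inl y'). split; [discriminate|]. intros _ _. simpl. auto.
    + exists (inl w0, inl w0). split; [discriminate|]. intros _ h; contradiction.
Qed.

Definition step k s s' : A * A := proj1_sig (constructive_indefinite_description _ (step_ex k s s')).

Fixpoint build (k : nat) : (nat -> A) * (nat -> A) :=
  match k with
  | 0 => (patA, patA)
  | S k => let p := build k in let q := step k (fst p) (snd p) in
           (upd (fst p) k (fst q), upd (snd p) k (snd q))
  end.

Lemma build_inv k : (Nat.even k = true -> TopM e e' f k (fst (build k)) (snd (build k))) /\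
                    (Nat.even k = false -> BotM e e' f k (fst (build k)) (snd (build k))).
Proof.
  induction k as [|k [IH1 IH2]].
  - split; [|discriminate]. intros _ u. split; intros _; right; intros i hi; lia.
  - pose proof (proj2_sig (constructive_indefinite_description _ (step_ex k (fst (build k)) (snd (build k))))) as [S1 S2].
    fold (step k (fst (build k)) (snd (build k))) in S1, S2.
    rewrite even_S. simpl. destruct (Nat.even k) eqn:Ek; simpl.
    + split; [discriminate|]. intros _. apply S1; auto.
    + split; [|discriminate]. intros _. apply S2; auto.
Qed.

Lemma build_side k : side (fst (build (S k)) k) = Nat.even k /\ side (snd (build (S k)) k) = Nat.even k.
Proof.
  destruct (build_inv k) as [I1 I2].
  pose proof (proj2_sig (constructive_indefinite_description _ (step_ex k (fst (build k)) (snd (build k))))) as [S1 S2].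
  fold (step k (fst (build k)) (snd (build k))) in S1, S2.
  simpl. rewrite !upd_eq. destruct (Nat.even k) eqn:Ek.
  - apply S1; auto.
  - apply S2; auto.
Qed.

Definition aa (i : nat) : A := fst (build (S i)) i.
Definition aa' (i : nat) : A := snd (build (S i)) i.

Lemma build_stable k : eqP k (fst (build k)) aa /\ eqP k (snd (build k)) aa'.
Proof.
  induction k as [|k [IH1 IH2]].
  - split; intros i hi; lia.
  - split; intros i hi; destruct (Nat.eq_dec i k) as [->|ne]; try reflexivity;
      simpl; rewrite upd_ne by auto; [apply IH1|apply IH2]; lia.
Qed.

Lemma aa_top k : Nat.even k = true -> TopM e e' f k aa aa'.
Proof.
  intro h. destruct (build_stable k) as [E1 E2]. apply (TopM_ext _ _ _ _ _ E1 E2). apply build_inv; auto.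
Qed.
Lemma aa_bot k : Nat.even k = false -> BotM e e' f k aa aa'.
Proof.
  intro h. destruct (build_stable k) as [E1 E2]. apply (BotM_ext _ _ _ _ _ E1 E2). apply build_inv; auto.
Qed.

Lemma exists_parity j (b : bool) : exists m, j < m /\ Nat.even m = b.
Proof.
  destruct (Bool.bool_dec (Nat.even (S j)) b) as [E|E].
  - exists (S j); split; auto.
  - exists (S (S j)); split; auto. rewrite even_S. destruct (Nat.even (S j)), b; simpl in *; congruence.
Qed.

Lemma fa_eq (u : Z e) : (forall i, za u i = aa i) -> forall i, za (f u) i = aa' i.
Proof.
  intros Hu. apply NNPP; intro N. apply not_all_ex_not in N.
  destruct (least_nat _ N) as [j [hj hmin]].
  assert (Ej : eqP j (za (f u)) aa'). { intros i hi. apply NNPP; intro; eapply hmin; eauto. }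
  assert (Eu : forall m, eqP m (za u) aa). { intros m i hi; auto. }
  destruct (ltA_total (za (f u) j) (aa' j)) as [l|[l|l]]; [|contradiction|].
  - destruct (exists_parity j false) as [m [hm pm]].
    pose proof (aa_bot m pm u) as H. apply proj1 in H.
    assert (leP m aa' (za (f u))) as H2.
    { apply H. right. intros i hi; symmetry; auto. }
    apply leP_iff_not_ltP in H2. apply H2. exists j; repeat split; auto.
  - destruct (exists_parity j true) as [m [hm pm]].
    pose proof (aa_top m pm u) as H. apply proj1 in H.
    assert (leP m (za (f u)) aa') as H2.
    { apply H. right. intros i hi; auto. }
    apply leP_iff_not_ltP in H2. apply H2. exists j; repeat split; auto.
    intros i hi; symmetry; auto.
Qed.
End Build.

Lemma Good_aa (a : nat -> A) : (forall k, side (a k) = Nat.even k) -> Good false (mkpt a (Qs false)).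
Proof.
  intro h. exists false, false. simpl. repeat split.
  - exists 0. intros k _. rewrite h. destruct (Nat.even k); auto.
  - exists 0. auto.
Qed.

Lemma noniso : ~ iso (Z false) (Z true).
Proof.
  intros [f [fs [fi fm]]].
  set (finv := fun v => proj1_sig (constructive_indefinite_description _ (fs v))).
  assert (Hfi : forall v, f (finv v) = v).
  { intro v. exact (proj2_sig (constructive_indefinite_description _ (fs v))). }
  assert (Hif : forall u, finv (f u) = u). { intro u. apply fi. apply Hfi. }
  set (a := aa false true f finv Hfi Hif fm).
  set (a' := aa' false true f finv Hfi Hif fm).
  assert (Ha : forall k, side (a k) = Nat.even k). { intro k. apply build_side. }
  assert (Ha' : forall k, side (a' k) = Nat.even k). { intro k. apply build_side. }
  set (u := exist _ (mkpt a (Qs false)) (Good_aa a Ha) : Z false).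
  assert (E1 : forall i, za (f u) i = a' i). { apply fa_eq. intros; reflexivity. }
  assert (E2 : forall i, zn (f u) i = zn u i). { intro i. apply (pres_n false true f fs fm). }
  destruct (proj2_sig (f u)) as [j1 [j2 [L [M X]]]].
  assert (j1 = false).
  { apply (Lam_uniq j1 false (za (f u))); auto. exists 0. intros k _. rewrite E1, Ha'.
    destruct (Nat.even k); auto. }
  assert (j2 = false).
  { apply (Mu_uniq j2 false (zn (f u))); auto. exists 0. intros k _. rewrite E2. reflexivity. }
  subst. discriminate.
Qed.
End Seq.

Theorem mainTheorem1 :
  forall W : LinOrd, is_omega1 W ->
  let A := osum (rev W) W in
  exists X Y : LinOrd,
    ~ iso X Y /\
    iso X (lexprod A Y) /\ iso X (lexprod Y omega) /\
    iso Y (lexprod A X) /\ iso Y (lexprod X omega).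
Proof.
  intros W HW A.
  exists (Z W false), (Z W true).
  split; [exact (noniso W HW)|].
  split; [exact (iso_A W false)|].
  split; [exact (iso_N W false)|].
  split; [exact (iso_A W true)|].
  exact (iso_N W true).
Qed.
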